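(* Let $\Omega\subseteq\mathbb R^N$ be an open bounded set, $K\in L^\infty(\Omega\times B_1)$ with $\lambda\le K\le\Lambda$ on $\Omega\times B_1$ for some $0<\lambda\le\Lambda$, and let $u\in L^1(B_1(\Omega))\cap C^{Dini}_{loc}(\Omega)\cap C(\overline\Omega)$ satisfy $L_Ku\le0$ in $\Omega$ and $u\le0$ on $\mathbb R^N\setminus\Omega$. Then $u\le0$ in $\Omega$.
   Context: $B_1(\Omega):=\bigcup_{x\in\Omega}B_1(x)$. $C^{Dini}_{loc}(\Omega)$: functions that on every closed ball contained in $\Omega$ admit a modulus of continuity $\omega$ with $\int_0^1\omega(\rho)\rho^{-1}d\rho<\infty$. $L_Ku(x):=\int_{B_1(x)}\frac{u(x)-u(y)}{|y-x|^N}K(x,y-x)\,dy$ for $x\in\Omega$. *)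

(* Defs.v *)
From HB Require Import structures.
From mathcomp Require Import all_boot all_order all_algebra.
From mathcomp Require Import all_classical all_reals all_analysis.
Set Implicit Arguments. Unset Strict Implicit. Unset Printing Implicit Defensive.
Import Order.TTheory GRing.Theory Num.Theory.
Import numFieldNormedType.Exports.
Local Open Scope classical_set_scope.
Local Open Scope ring_scope.

(* R^N is modelled as N.-tuple R, which MathComp-Analysis equips with the
   product (= Borel) sigma-algebra generated by the coordinate projections. *)
Section Euclid.
Context {R : realType} {N : nat}.
Notation V := (N.-tuple R).

Definition tsub (x y : V) : V := [tuple tnth x i - tnth y i | i < N].

Definition edist (x y : V) : R :=
  Num.sqrt (\sum_(i < N) (tnth x i - tnth y i) ^+ 2).

Definition eball (x : V) (r : R) : set V := [set y | edist x y < r].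
Definition ecball (x : V) (r : R) : set V := [set y | edist x y <= r].

Definition eopen (A : set V) : Prop :=
  forall x, A x -> exists2 r : R, 0 < r & eball x r `<=` A.
Definition ebounded (A : set V) : Prop :=
  exists M : R, forall x y, A x -> A y -> edist x y <= M.
Definition eclosure (A : set V) : set V :=
  [set x | forall r : R, 0 < r -> exists2 y, A y & edist x y < r].

Definition B1 (A : set V) : set V := \bigcup_(x in A) eball x 1.

Definition econt_on (A : set V) (u : V -> R) : Prop :=
  forall x, A x -> forall e : R, 0 < e ->
    exists2 d : R, 0 < d & forall y, A y -> edist x y < d -> `|u x - u y| < e.

Definition dini_modulus (w : R -> R) : Prop :=
  [/\ forall r, 0 <= r -> 0 <= w r,
      forall r s, 0 <= r -> r <= s -> w r <= w s &
      (\int[@lebesgue_measure R]_(r in `]0%R, 1%R]) (w r / r)%:E < +oo)%E].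

Definition dini_loc (A : set V) (u : V -> R) : Prop :=
  forall (c : V) (r : R), 0 < r -> ecball c r `<=` A ->
    exists w : R -> R, dini_modulus w /\
      forall x y, ecball c r x -> ecball c r y -> `|u x - u y| <= w (edist x y).

End Euclid.

(* N-dimensional Lebesgue measure on N.-tuple R, defined by iterating the
   one-dimensional Lebesgue measure (Tonelli / Cavalieri):
   leb_0 = Dirac mass at the empty tuple,
   leb_{n+1}(A) = int_R leb_n {t | (x :: t) in A} dx. *)
Fixpoint lebN (R : realType) (n : nat) : set (n.-tuple R) -> \bar R :=
  match n return set (n.-tuple R) -> \bar R with
  | 0 => fun A => ((asbool (A [tuple]))%:R)%:E
  | n'.+1 => fun A =>
      (\int[@lebesgue_measure R]_x @lebN R n' [set t : n'.-tuple R | A (cons_tuple (x : R) t)])%E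
  end.

Definition LK {R : realType} {N : nat} (K : N.-tuple R -> N.-tuple R -> R)
  (u : N.-tuple R -> R) (x : N.-tuple R) : \bar R :=
  (\int[@lebN R N]_(y in eball x 1) ((u x - u y) / edist y x ^+ N * K x (tsub y x))%:E)%E.

(* Main.v *)
Require Import Defs.
From HB Require Import structures.
From mathcomp Require Import all_boot all_order all_algebra.
From mathcomp Require Import all_classical all_reals all_analysis.
Import Order.TTheory GRing.Theory Num.Theory.
Import numFieldNormedType.Exports.
Local Open Scope classical_set_scope.
Local Open Scope ring_scope.
From mathcomp Require Import lra ring.
Import Defs.
Import HBNNSimple.
Set Implicit Arguments. Unset Strict Implicit. Unset Printing Implicit Defensive.
Section Eu.
Context {R : realType} {N : nat}.
Notation V := (N.-tuple R).
Implicit Types x y z : V.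

Lemma sumsq_ge0 x y : 0 <= \sum_(i < N) (tnth x i - tnth y i) ^+ 2.
Proof. by apply: sumr_ge0 => i _; rewrite sqr_ge0. Qed.

Lemma edistC x y : edist x y = edist y x.
Proof. by rewrite /edist; congr Num.sqrt; apply: eq_bigr => i _; rewrite -sqrrN opprB. Qed.

Lemma coord_le x y i : `|tnth x i - tnth y i| <= edist x y.
Proof.
rewrite -sqrtr_sqr /edist ler_sqrt ?sumsq_ge0 // (bigD1 i) //= lerDl.
by apply: sumr_ge0 => j _; rewrite sqr_ge0.
Qed.

Lemma edist_eq0 x y : edist x y = 0 -> x = y.
Proof.
move=> h; apply: eq_from_tnth => i; have := coord_le x y i; rewrite h.
by rewrite normr_le0 subr_eq0 => /eqP.
Qed.

Lemma box_lt x y (s : R) : (0 < N)%N -> (forall i, `|tnth x i - tnth y i| < s) ->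
  edist x y < s * N%:R.
Proof.
move=> N0 h.
have s0 : 0 < s by have := h (Ordinal N0); apply: le_lt_trans.
have hs : \sum_(i < N) (tnth x i - tnth y i) ^+ 2 < \sum_(i < N) s ^+ 2.
  apply: ltr_sum; first by apply/hasP; exists (Ordinal N0); rewrite ?mem_index_enum.
  move=> i _; rewrite -real_normK ?num_real // ltrXn2r // (le_lt_trans _ (h i)) //.
rewrite sumr_const card_ord in hs.
have N1 : 1 <= (N%:R : R) by rewrite ler1n.
rewrite -(ger0_norm (ltW (mulr_gt0 s0 (lt_le_trans ltr01 N1)))) -sqrtr_sqr /edist.
rewrite ltr_sqrt; last by rewrite exprn_gt0 // mulr_gt0 // (lt_le_trans ltr01 N1).
apply: (lt_le_trans hs); rewrite exprMn -[s ^+ 2 *+ N]mulr_natr.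
move: N1; set n := (N%:R : R) => N1; have := sqr_ge0 s; set q := s ^+ 2 => q0; rewrite expr2; apply: ler_pM => //; try lra; nra.
Qed.


Lemma sq_bound (a d s : R) : `|a| <= 1 -> `|d| < s -> s <= 1 ->
  (a + d) ^+ 2 < a ^+ 2 + 3 * s.
Proof.
move=> ha hd s1.
have h1 : a * d <= `|a| * `|d| by rewrite -normrM ler_norm.
have h2 : d ^+ 2 = `|d| ^+ 2 by rewrite real_normK ?num_real.
have A0 := normr_ge0 a; have D0 := normr_ge0 d.
rewrite sqrrD h2; move: h1 ha hd A0 D0; set A := `|a|; set D := `|d| => h1 ha hd A0 D0.
rewrite !expr2; nra.
Qed.

Lemma near_ball x y : (0 < N)%N -> edist x y < 1 ->
  exists2 s : R, 0 < s & forall z, (forall i, `|tnth z i - tnth y i| < s) -> edist x z < 1.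
Proof.
move=> N0 hxy.
set e2 := \sum_(i < N) (tnth x i - tnth y i) ^+ 2.
have he2 : e2 < 1 by move: hxy; rewrite /edist -{1}sqrtr1 ltr_sqrt ?ltr01.
have Npos : 0 < (N%:R : R) by rewrite ltr0n.
pose s := Num.min 1 ((1 - e2) / (3 * N%:R)).
have s0 : 0 < s by rewrite lt_min ltr01 divr_gt0 ?subr_gt0 ?mulr_gt0.
exists s => // z hz.
rewrite /edist -sqrtr1 ltr_sqrt ?ltr01 //.
have : \sum_(i < N) (tnth x i - tnth z i) ^+ 2 < \sum_(i < N) ((tnth x i - tnth y i) ^+ 2 + 3 * s).
  apply: ltr_sum; first by apply/hasP; exists (Ordinal N0); rewrite ?mem_index_enum.
  move=> i _; have -> : tnth x i - tnth z i = (tnth x i - tnth y i) + (tnth y i - tnth z i) by rewrite addrA subrK.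
  apply: sq_bound; first by apply: ltW; apply: le_lt_trans (coord_le x y i) hxy.
    by rewrite distrC; apply: hz.
  by rewrite ge_min lexx.
move/lt_le_trans; apply.
rewrite big_split /= sumr_const card_ord -/e2 -mulr_natr.
have : s <= (1 - e2) / (3 * N%:R) by rewrite ge_min lexx orbT.
rewrite ler_pdivlMr ?mulr_gt0 // => hs.
lra.
Qed.

End Eu.

Section Leb.
Context {R : realType}.

Definition cube n (y : n.-tuple R) (s : R) : set (n.-tuple R) :=
  [set t | forall i, `|tnth t i - tnth y i| < s].

Lemma lebN_set0 n : @lebN R n set0 = 0%E.
Proof.
elim: n => [|n IH] /=; first by rewrite asboolF.
transitivity (\int[@lebesgue_measure R]_x (cst 0%E x))%E; last by rewrite integral0.
by apply: eq_integral => x _; rewrite -IH.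
Qed.

Lemma forall_ordS n (P : 'I_n.+1 -> Prop) :
  (forall i, P i) <-> P ord0 /\ (forall i : 'I_n, P (lift ord0 i)).
Proof.
split=> [h|[h0 h] i]; first by split.
by case: (unliftP ord0 i) => [j ->|->].
Qed.

Lemma lebN_cube n (y : n.-tuple R) s : 0 < s -> @lebN R n (cube y s) = ((2 * s) ^+ n)%:E.
Proof.
move=> s0; elim: n y => [|n IH] y /=.
  by rewrite asboolT // => i; case: i.
rewrite [y]tuple_eta.
set y0 := thead y; set y' := [tuple of behead y].
pose I : set R := [set` `]y0 - s, y0 + s[].
have E : forall x : R, @lebN R n [set t | cube [tuple of y0 :: y'] s (cons_tuple x t)] =
    (((cst ((2 * s) ^+ n)%:E) \_ I) x)%E.
  move=> x; rewrite /patch; case: ifPn => [|/negP]; rewrite inE /I /= in_itv /=.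
    move=> /andP[h1 h2].
    rewrite -(IH y'); congr (@lebN R n); apply/funext => t; apply/propext.
    rewrite /cube /= forall_ordS tnth0 tnth0; split=> [[_ h] i|h]; first by have := h i; rewrite !tnthS.
    split; first by rewrite ltr_norml; lra.
    by move=> i; rewrite !tnthS.
  move=> hx; have -> : (point : \bar R) = 0%E by []. rewrite -(lebN_set0 n); congr (@lebN R n); apply/funext => t; apply/propext.
  rewrite /cube /= forall_ordS tnth0 tnth0; split=> // [[h _]]; apply: hx.
  by move: h; rewrite ltr_norml => /andP[]; lra.
transitivity (\int[@lebesgue_measure R]_x (((cst ((2 * s) ^+ n)%:E) \_ I) x))%E.
  by apply: eq_integral => x _; rewrite E.
rewrite -integral_mkcond integral_cst //=; last exact: measurable_itv.
rewrite /I (@lebesgue_measure_itv R `]y0 - s, y0 + s[) /= ifT; last by rewrite lte_fin; lra.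
by rewrite -EFinD -EFinM exprS mulrC; congr (_ * _)%:E; lra.
Qed.

End Leb.

Section Low.
Context {R : realType} {N : nat}.
Notation V := (N.-tuple R).

Lemma int_lower (D C : set V) (mC : measurable C) (f : V -> R) (c : R) :
  0 < c -> C `<=` D -> (forall y, D y -> 0 <= f y) -> (forall y, C y -> c <= f y) ->
  (c%:E * @lebN R N C <= \int[@lebN R N]_(y in D) (f y)%:E)%E.
Proof.
move=> c0 CD f0 fc.
have g0 : forall x, (0 <= ((fun y => (f y)%:E) \_ D) x)%E.
  by move=> x; rewrite /patch; case: ifPn => // /[!inE] /f0; rewrite lee_fin.
rewrite /integral.
set A := ereal_sup _; set B := ereal_sup _.
have hB : (B <= 0)%E.
  apply: ge_ereal_sup => _ [h hh <-].
  have hz : forall x, h x = 0.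
    move=> x; apply/le_anti; rewrite fun_ge0 andbT -lee_fin.
    by apply: le_trans (hh x) _; rewrite funenegE; rewrite max_r // oppe_le0.
  rewrite /sintegral le_eqVlt; apply/orP; left; apply/eqP; apply: fsbig1 => r _.
  have [->|r0] := eqVneq r 0; first by rewrite mul0e.
  have -> : h @^-1` [set r] = set0.
    by apply/seteqP; split => x //=; rewrite hz => /esym/eqP; rewrite (negbTE r0).
  by rewrite lebN_set0 mule0.
have hA : (c%:E * lebN C <= A)%E.
  apply: ereal_sup_ubound; exists (scale_nnsfun (indic_nnsfun R mC) (ltW c0)).
    move=> x /=; rewrite funeposE measurable_realfun.mindicE; rewrite le_max; apply/orP; left.
    rewrite /patch; case: (boolP (x \in C)) => xC.
      rewrite ifT; last by rewrite inE; apply: CD; rewrite -inE.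
      by rewrite mulr1 lee_fin; apply: fc; rewrite -inE.
    by rewrite mulr0; apply: g0.
  rewrite /sintegral -(fsbig_widen [set c] setT) //=; last first.
    move=> r [_ /= rc]; have [->|r0] := eqVneq r 0; first by rewrite mul0e.
    have -> : (scale_nnsfun (indic_nnsfun R mC) (ltW c0)) @^-1` [set r] = set0.
      apply/seteqP; split; last exact: sub0set.
      move=> x /=; rewrite /measurable_realfun.mindic indicE.
      case: (x \in C); rewrite /= ?mulr1 ?mulr0 => /esym; first exact: rc.
      by move=> h; move: r0; rewrite h eqxx.
    by rewrite lebN_set0 mule0.
  rewrite fsbig_set1; congr (_ * lebN _)%E.
  apply/seteqP; split => x /=; rewrite measurable_realfun.mindicE.
    case: (boolP (x \in C)); rewrite ?inE // mulr0 => _ /eqP; rewrite eq_sym (gt_eqF c0).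
    by [].
  by move=> Cx; rewrite mem_set // mulr1.
by apply: le_trans hA (leeDl _ _); rewrite oppe_ge0.
Qed.
End Low.

Section Cpt.
Context {R : realType} {N : nat}.
Notation V := (N.-tuple R).

Definition psi (v : 'rV[R]_N) : V := [tuple v ord0 i | i < N].
Definition phi (x : V) : 'rV[R]_N := \row_i tnth x i.

Lemma tnth_psi v i : tnth (psi v) i = v ord0 i.
Proof. by rewrite tnth_mktuple. Qed.

Lemma psi_phi x : psi (phi x) = x.
Proof. by apply: eq_from_tnth => i; rewrite tnth_psi mxE. Qed.

Lemma coord_norm (v : 'rV[R]_N) i : `|v ord0 i| <= `|v|.
Proof.
have /mapP[j Hj ->] : `|v ord0 i| \in [seq `|v x.1 x.2| | x : 'I_1 * 'I_N].
  by apply/mapP; exists (ord0, i) => //=; rewrite mem_enum.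
have -> : `|v| = mx_norm v by []. by rewrite mx_normrE; apply/bigmax_geP; right => /=; exists j.
Qed.

Lemma edist_refl (x : V) : edist x x = 0.
Proof. by rewrite /edist big1 ?sqrtr0 // => i _; rewrite subrr expr0n. Qed.

Lemma max_closure (Omega : set V) (u : V -> R) (x1 : V) : (0 < N)%N ->
  ebounded Omega -> Omega x1 -> econt_on (eclosure Omega) u ->
  exists2 x0, eclosure Omega x0 & forall y, eclosure Omega y -> u y <= u x0.
Proof.
move=> N0 [M hM] Ox1 hc.
have Npos : 0 < (N%:R : R) by rewrite ltr0n.
pose A := [set v : 'rV[R]_N | eclosure Omega (psi v)].
have M0 : 0 <= M by have := hM x1 x1 Ox1 Ox1; rewrite edist_refl.
have A0 : A !=set0.
  by exists (phi x1); rewrite /A /= psi_phi => r r0; exists x1 => //; rewrite edist_refl.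
have bA : bounded_set A.
  exists (1 + M + \sum_(i < N) `|tnth x1 i|); split; first by rewrite num_real.
  move=> B hB v Av; apply: (le_trans _ (ltW hB)).
  have -> : `|v| = mx_norm v by []. rewrite mx_normrE; apply: bigmax_le.
    by rewrite addr_ge0 ?addr_ge0 // sumr_ge0.
  move=> [i0 i] _ /=; rewrite ord1.
  have [z Oz hz] := Av 1 ltr01.
  have h1 := coord_le (psi v) z i; have h2 := coord_le z x1 i; have h3 := hM _ _ Oz Ox1.
  have h4 : `|tnth x1 i| <= \sum_(j < N) `|tnth x1 j|.
    by rewrite (bigD1 i) //= lerDl sumr_ge0.
  rewrite tnth_psi in h1.
  have h5 := ler_normD (v ord0 i - tnth z i + (tnth z i - tnth x1 i)) (tnth x1 i).
  have h6 := ler_normD (v ord0 i - tnth z i) (tnth z i - tnth x1 i).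
  have E : v ord0 i - tnth z i + (tnth z i - tnth x1 i) + tnth x1 i = v ord0 i by ring.
  rewrite E in h5; lra.
have cA : closed A.
  move=> v hv; rewrite /A /= => r r0.
  pose s := r / (2 * N%:R).
  have s0 : 0 < s by rewrite divr_gt0 // mulr_gt0.
  have [w [Aw bw]] := hv _ (nbhsx_ballx v _ s0).
  rewrite -ball_normE /ball_ /= in bw.
  have [y Oy hy] := Aw s s0.
  exists y => //.
  have -> : r = (2 * s) * N%:R by rewrite /s; field; rewrite gt_eqF //.
  apply: box_lt => // i; rewrite tnth_psi.
  have h1 := coord_le (psi w) y i; rewrite tnth_psi in h1.
  have h2 := coord_norm (v - w) i; rewrite !mxE in h2.
  have h5 := ler_normD (v ord0 i - w ord0 i) (w ord0 i - tnth y i).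
  have E : v ord0 i - w ord0 i + (w ord0 i - tnth y i) = v ord0 i - tnth y i by ring.
  rewrite E in h5; lra.
have fc : {within A, continuous (fun v => u (psi v))}.
  rewrite continuous_subspace_in => x Ax.
  have Ax' : A x by rewrite inE in Ax.
  apply/cvgrPdist_lt => e e0.
  have [d d0 hd] := hc _ Ax' e e0.
  rewrite /= -nbhs_subspace_in //.
  rewrite /within /=; apply/nbhs_ballP; exists (d / N%:R); first by rewrite /= divr_gt0.
  move=> t bt At; rewrite /from_subspace.
  rewrite -ball_normE /ball_ /= in bt.
  apply: hd; first exact: At.
  have -> : d = (d / N%:R) * N%:R by rewrite divfK // gt_eqF.
  apply: box_lt => // i; rewrite !tnth_psi.
  have := coord_norm (x - t) i; rewrite !mxE => h; exact: (le_lt_trans h bt).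
have [c Ac hmax] := EVT_max_rV A0 (bounded_closed_compact bA cA) fc.
exists (psi c); first by rewrite inE in Ac.
by move=> y hy; rewrite -(psi_phi y); apply: hmax; rewrite inE /A /= psi_phi.
Qed.

End Cpt.

Section Fin.
Context {R : realType} {N : nat}.
Notation V := (N.-tuple R).

Lemma cube_measurable (y : V) (s : R) : measurable (cube y s).
Proof.
have -> : cube y s = \bigcap_(i in [set` enum 'I_N]) ((@tnth N R ^~ i) @^-1` [set` `]tnth y i - s, tnth y i + s[]).
  apply/seteqP; split => t /=.
    by move=> h i _ /=; rewrite in_itv /= -ltr_distlC distrC.
  move=> h i; have := h i; rewrite /= mem_enum in_itv /= -ltr_distlC distrC; apply; by [].
rewrite bigcap_seq; apply: bigsetI_measurable => i _.
rewrite -[X in measurable X]setTI; apply: (measurable_tnth i) => //; exact: measurable_itv.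
Qed.

Lemma sub_closure (Omega : set V) y : Omega y -> eclosure Omega y.
Proof. by move=> Oy r r0; exists y => //; rewrite edist_refl. Qed.

Lemma edist_tsub (x z : V) : edist (nseq_tuple N 0) (tsub z x) = edist x z.
Proof.
rewrite /edist; congr Num.sqrt; apply: eq_bigr => i _.
by rewrite tnth_nseq /tsub tnth_mktuple sub0r sqrrN -sqrrN opprB.
Qed.


Lemma key (Omega : set V) (K : V -> V -> R) (lam : R) (u : V -> R) (x0 y : V) :
  (0 < N)%N -> 0 < lam ->
  (forall z, eball (nseq_tuple N (0 : R)) 1 z -> lam <= K x0 z) ->
  econt_on (eclosure Omega) u ->
  (LK K u x0 <= 0)%E ->
  (forall z, ~ Omega z -> u z <= 0) ->
  (forall z, u z <= u x0) -> 0 < u x0 ->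
  edist x0 y < 1 -> u y = u x0.
Proof.
move=> N0 lam0 Kb ec LK0 uout gmax M0 hy.
apply/eqP; rewrite eq_le gmax /= leNgt; apply/negP => uy.
set M := u x0 in gmax M0 uy *.
pose e := (M - u y) / 2.
have e0 : 0 < e by rewrite /e divr_gt0 // subr_gt0.
have eE : u y + e = M - e by rewrite /e; field.
pose B := Order.max (M - e) 0.
have BM : B < M.
  rewrite /B gt_max; apply/andP; split; lra.
have eB : M - e <= B by rewrite /B le_max lexx.
have B0 : 0 <= B by rewrite /B le_max lexx orbT.
have [rho rho0 hrho] : exists2 rho : R, 0 < rho & forall z, edist y z < rho -> u z <= B.
  case: (pselect (eclosure Omega y)) => [cy|ncy].
    have [d d0 hd] := ec y cy _ e0; exists d => // z hz.
    case: (pselect (Omega z)) => [Oz|nOz]; last by apply: le_trans (uout _ nOz) B0.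
    have := hd z (sub_closure Oz) hz; rewrite ltr_distlC => /andP[_ h].
    apply: le_trans eB; lra.
  have [r [r0 hr]] : exists r : R, 0 < r /\ forall z, Omega z -> r <= edist y z.
    apply: contrapT => hn; apply: ncy => r r0; apply: contrapT => hr; apply: hn.
    exists r; split => // z Oz; rewrite leNgt; apply/negP => hz; apply: hr; exists z => //.
  exists r => // z hz; apply: le_trans (uout _ _) B0 => Oz.
  by have := hr z Oz; rewrite leNgt hz.
have [s1 s10 hs1] := near_ball N0 hy.
have Npos : 0 < (N%:R : R) by rewrite ltr0n.
pose s := Order.min s1 (rho / N%:R).
have s0 : 0 < s by rewrite lt_min s10 divr_gt0.
have CD : cube y s `<=` eball x0 1.
  move=> z hz; apply: hs1 => i; apply: lt_le_trans (hz i) _; by rewrite ge_min lexx.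
have Cu : forall z, cube y s z -> u z <= B.
  move=> z hz; apply: hrho; rewrite edistC; apply: lt_le_trans (box_lt N0 hz) _.
  have : s <= rho / N%:R by rewrite ge_min lexx orbT.
  by rewrite ler_pdivlMr.
pose f := fun z => (u x0 - u z) / edist z x0 ^+ N * K x0 (tsub z x0).
have Kz : forall z, eball x0 1 z -> lam <= K x0 (tsub z x0).
  by move=> z hz; apply: Kb; rewrite /eball /= edist_tsub.
have pos : forall z, eball x0 1 z -> 0 <= f z.
  move=> z hz; rewrite /f mulr_ge0 ?divr_ge0 ?subr_ge0 ?exprn_ge0 ?sqrtr_ge0 //.
  exact: le_trans (ltW lam0) (Kz z hz).
have lowb : forall z, cube y s z -> (M - B) * lam <= f z.
  move=> z hz; have Dz := CD z hz; have uz := Cu z hz.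
  have dpos : 0 < edist z x0.
    rewrite lt_neqAle sqrtr_ge0 andbT; apply/negP => /eqP/esym/edist_eq0 zx.
    by move: uz; rewrite zx -/M; lra.
  have d1 : edist z x0 < 1 by rewrite edistC.
  have p0 : 0 < edist z x0 ^+ N by rewrite exprn_gt0.
  have p1 : edist z x0 ^+ N <= 1 by rewrite exprn_ile1 // ?sqrtr_ge0 // ltW.
  rewrite /f; apply: ler_pM; first by lra.
  - exact: ltW.
  - rewrite ler_pdivlMr //; apply: (@le_trans _ _ ((M - B) * 1)).
      by rewrite ler_wpM2l //; lra.
    rewrite mulr1 -/M; lra.
  - exact: Kz.
have cpos : 0 < (M - B) * lam by rewrite mulr_gt0 // subr_gt0.
have := int_lower (cube_measurable y s) cpos CD pos lowb.
rewrite lebN_cube // => hi.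
have := le_trans hi LK0; rewrite -EFinM lee_fin => h.
have : 0 < (M - B) * lam * (2 * s) ^+ N by rewrite mulr_gt0 // exprn_gt0 // mulr_gt0.
lra.
Qed.

Definition shift (i0 : 'I_N) (x : V) (c : R) : V :=
  [tuple tnth x i + (if i == i0 then c else 0) | i < N].

Lemma tnth_shift i0 x c : tnth (shift i0 x c) i0 = tnth x i0 + c.
Proof. by rewrite tnth_mktuple eqxx. Qed.

Lemma edist_shift i0 x c : edist x (shift i0 x c) = `|c|.
Proof.
rewrite /edist (bigD1 i0) //= big1 ?addr0.
  by rewrite tnth_shift opprD addrA subrr sub0r sqrrN sqrtr_sqr.
by move=> i /negbTE hi; rewrite tnth_mktuple hi addr0 subrr expr0n.
Qed.

End Fin.

Unset Implicit Arguments.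
Theorem lemma4p1 (R : realType) (N : nat) (Omega : set (N.-tuple R))
  (K : N.-tuple R -> N.-tuple R -> R) (lam Lam : R) (u : N.-tuple R -> R) :
  (0 < N)%N ->
  eopen Omega -> ebounded Omega ->
  0 < lam -> lam <= Lam ->
  measurable_fun (Omega `*` eball (nseq_tuple N (0 : R)) 1)
    (fun p : N.-tuple R * N.-tuple R => K p.1 p.2) ->
  (forall x z, Omega x -> eball (nseq_tuple N (0 : R)) 1 z ->
     lam <= K x z <= Lam) ->
  measurable_fun (B1 Omega) u ->
  (\int[@lebN R N]_(y in B1 Omega) (`|u y|)%:E < +oo)%E ->
  dini_loc Omega u ->
  econt_on (eclosure Omega) u ->
  (forall x, Omega x -> (LK K u x <= 0)%E) ->
  (forall x, ~ Omega x -> u x <= 0) ->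
  forall x, Omega x -> u x <= 0.
Proof.
move=> N0 oO bO lam0 lamL mK Kb mu iu dini ec LKle uout x Ox.
rewrite leNgt; apply/negP => ux.
have [x0 cx0 hmax] := max_closure N0 bO Ox ec.
have Mpos : 0 < u x0 := lt_le_trans ux (hmax x (sub_closure Ox)).
have Ox0 : Omega x0 by case: (pselect (Omega x0)) => // h; have := uout _ h; lra.
have gmax : forall y, u y <= u x0.
  move=> y; case: (pselect (Omega y)) => [Oy|nOy]; first exact: hmax (sub_closure Oy).
  by have := uout _ nOy; lra.
pose i0 := Ordinal N0.
have chain : forall k : nat, exists z, [/\ Omega z, u z = u x0 & tnth z i0 = tnth x0 i0 + k%:R / 2].
  elim => [|k [z [Oz uz tz]]]; first by exists x0; rewrite mul0r addr0.
  pose z' := shift i0 z (1 / 2).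
  have uz' : u z' = u z.
    apply: (key N0 lam0 _ ec (LKle z Oz) uout) => //.
    - by move=> w hw; case/andP: (Kb z w Oz hw).
    - by move=> w; rewrite uz.
    - by rewrite uz.
    - by rewrite edist_shift ger0_norm ?divr_ge0 //; lra.
  exists z'; split.
  - by case: (pselect (Omega z')) => // h; have := uout _ h; rewrite uz' uz; lra.
  - by rewrite uz' uz.
  - by rewrite tnth_shift tz -[k.+1]addn1 natrD; lra.
have [M hM] := bO.
pose k := (Num.trunc (2 * M)).+1.
have hk := truncnS_gt (2 * M).
have [z [Oz _ tz]] := chain k.
have := le_trans (coord_le x0 z i0) (hM _ _ Ox0 Oz); rewrite tz.
have -> : tnth x0 i0 - (tnth x0 i0 + k%:R / 2) = - (k%:R / 2) by ring.
rewrite normrN ger0_norm ?divr_ge0 //; rewrite -/k in hk; lra.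
Qed.
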